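(* Let $a,b,c$ be positive numbers with $a<b<c$; set $c_0=c-\lfloor c/b\rfloor b$, $(c_0+a-b)_+=\max(c_0+a-b,0)$ and $c_0\wedge a=\min(c_0,a)$. Define $\lambda_{a,b,c}(t)=\lfloor c/b\rfloor b+b$ for $t\in[0,(c_0+a-b)_+)+a\mathbb Z$, $\lambda_{a,b,c}(t)=0$ for $t\in[(c_0+a-b)_+,c_0\wedge a)+a\mathbb Z$, $\lambda_{a,b,c}(t)=\lfloor c/b\rfloor b$ for $t\in[c_0\wedge a,a)+a\mathbb Z$; and $\tilde\lambda_{a,b,c}(t)=-\lfloor c/b\rfloor b-b$ for $t\in[c-(c_0+a-b)_+,c)+a\mathbb Z$, $\tilde\lambda_{a,b,c}(t)=0$ for $t\in[c-c_0\wedge a,c-(c_0+a-b)_+)+a\mathbb Z$, $\tilde\lambda_{a,b,c}(t)=-\lfloor c/b\rfloor b$ for $t\in[c-a,c-c_0\wedge a)+a\mathbb Z$. Then $$\mathcal S_{a,b,c}\cap\Big(\big([(c_0+a-b)_+,c_0\wedge a)\cup[c-c_0\wedge a,c-(c_0+a-b)_+)\big)+a\mathbb Z\Big)=\emptyset,$$ and for every $t\in\mathcal S_{a,b,c}$ and every $\mathbf x\in\mathcal B_b^0$ with $\mathbf M_{a,b,c}(t)\mathbf x=\mathbf 1$ one has $\mathbf x(\lambda)=1$ for $\lambda\in\{\lambda_{a,b,c}(t),0,\tilde\lambda_{a,b,c}(t)\}$ and $\mathbf x(\lambda)=0$ for all $\lambda\in b\mathbb Z$ with $\tilde\lambda_{a,b,c}(t)<\lambda<\lambda_{a,b,c}(t)$,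 $\lambda\ne0$.
   Context: For $a,b,c>0$ and $t\in\mathbb R$, $\mathbf M_{a,b,c}(t)=(\chi_{[0,c)}(t-\mu+\lambda))_{\mu\in a\mathbb Z,\lambda\in b\mathbb Z}$ is the infinite matrix with rows indexed by $a\mathbb Z$ and columns by $b\mathbb Z$, acting by $(\mathbf M_{a,b,c}(t)\mathbf x)(\mu)=\sum_{\lambda\in b\mathbb Z}\chi_{[0,c)}(t-\mu+\lambda)\mathbf x(\lambda)$. $\mathcal B_b$ is the set of vectors $(\mathbf x(\lambda))_{\lambda\in b\mathbb Z}$ with entries in $\{0,1\}$, and $\mathcal B_b^0=\{\mathbf x\in\mathcal B_b:\mathbf x(0)=1\}$. $\mathbf 1$ denotes the vector indexed by $a\mathbb Z$ all of whose entries are $1$. $\mathcal S_{a,b,c}=\{t\in\mathbb R:\mathbf M_{a,b,c}(t)\mathbf x=\mathbf 1\text{ for some }\mathbf x\in\mathcal B_b^0\}$. For $A\subset\mathbb R$, $A+a\mathbb Z=\{x+ak:x\in A,k\in\mathbb Z\}$. *)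

(* Defs.v *)
From Stdlib Require Import Reals Lra Lia ZArith.
Open Scope R_scope.

(* floor x, as the integer Int_part x (IZR (Int_part x) <= x < IZR (Int_part x) + 1) *)
Definition floorR (x : R) : R := IZR (Int_part x).

Definition chi (c s : R) : R :=
  if Rle_dec 0 s then (if Rlt_dec s c then 1 else 0) else 0.

(* A vector indexed by bZ is represented as x : Z -> R, x k = x(k b).
   B_b : entries in {0,1};  B_b^0 : additionally x(0) = 1. *)
Definition in_Bb (x : Z -> R) : Prop := forall k : Z, x k = 0 \/ x k = 1.
Definition in_Bb0 (x : Z -> R) : Prop := in_Bb x /\ x 0%Z = 1.

(* Entry mu = m a of M_{a,b,c}(t) x :
   sum over lambda = k b of chi_[0,c)(t - m a + k b) x(k b).
   All terms with k outside [lo, hi] vanish (for b, c > 0), where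
   lo = floor((m a - t)/b), hi = floor((m a - t + c)/b); so the sum is taken
   over this finite window, which is literally the (finite) series. *)
Definition Mx_entry (a b c t : R) (x : Z -> R) (m : Z) : R :=
  let lo := Int_part ((IZR m * a - t) / b) in
  let hi := Int_part ((IZR m * a - t + c) / b) in
  sum_f_R0 (fun j : nat =>
      chi c (t - IZR m * a + IZR (lo + Z.of_nat j) * b) * x (lo + Z.of_nat j)%Z)
    (Z.to_nat (hi - lo)).

Definition M_eq_one (a b c t : R) (x : Z -> R) : Prop :=
  forall m : Z, Mx_entry a b c t x m = 1.

Definition S_abc (a b c t : R) : Prop :=
  exists x : Z -> R, in_Bb0 x /\ M_eq_one a b c t x.

Definition in_shift (A : R -> Prop) (a t : R) : Prop :=
  exists k : Z, A (t - IZR k * a).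

Definition Ico (u v : R) (s : R) : Prop := u <= s /\ s < v.

Definition c0 (b c : R) : R := c - floorR (c / b) * b.
Definition posp (a b c : R) : R := Rmax (c0 b c + a - b) 0.
Definition minca (a b c : R) : R := Rmin (c0 b c) a.

Definition modR (t a : R) : R := t - floorR (t / a) * a.

(* lambda_{a,b,c}(t): t is in [r] + aZ with r = t mod a in [0,a);
   [0,a) is partitioned into [0,posp), [posp, minca), [minca, a). *)
Definition lam (a b c t : R) : R :=
  let r := modR t a in
  if Rlt_dec r (posp a b c) then floorR (c / b) * b + b
  else if Rlt_dec r (minca a b c) then 0
  else floorR (c / b) * b.

(* tilde lambda_{a,b,c}(t): t is in [c - a + r] + aZ with r = (t-(c-a)) mod a;
   [c-a,c) is partitioned into [c-a, c-minca), [c-minca, c-posp), [c-posp, c). *)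
Definition lamt (a b c t : R) : R :=
  let r := modR (t - (c - a)) a in
  if Rlt_dec (c - a + r) (c - minca a b c) then - (floorR (c / b) * b)
  else if Rlt_dec (c - a + r) (c - posp a b c) then 0
  else - (floorR (c / b) * b) - b.

(* Main.v *)
Require Import Defs.
From Stdlib Require Import Reals Lra Lia ZArith Classical.
Open Scope R_scope.

Lemma floor_mul u b : 0 < b ->
  IZR (Int_part (u/b)) * b <= u /\ u < IZR (Int_part (u/b)) * b + b.
Proof.
  intros hb. destruct (base_Int_part (u/b)) as [h1 h2].
  set (y := u/b) in *. assert (u = y*b) by (unfold y; field; lra).
  split; nra.
Qed.

Lemma zle_mul i j b : 0 < b -> IZR i * b <= IZR j * b -> (i <= j)%Z.
Proof. intros hb h. apply le_IZR. nra. Qed.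

Lemma zlt_mul i j b : 0 < b -> IZR i * b < IZR j * b -> (i < j)%Z.
Proof. intros hb h. apply lt_IZR. nra. Qed.

Lemma zeq_mul i j b : 0 < b -> IZR i * b = IZR j * b -> i = j.
Proof. intros hb h. apply eq_IZR. nra. Qed.

Lemma z01 j b : 0 < b -> - b < IZR j * b -> IZR j * b < 2 * b -> j = 0%Z \/ j = 1%Z.
Proof.
  intros hb h1 h2.
  assert (-1 < j)%Z by (apply lt_IZR; simpl; nra).
  assert (j < 2)%Z by (apply lt_IZR; simpl; nra). lia.
Qed.

Lemma sum_zero (f : nat -> R) N : (forall i, (i <= N)%nat -> f i = 0) -> sum_f_R0 f N = 0.
Proof.
  induction N; intros H; simpl.
  - apply H; lia.
  - rewrite IHN by (intros; apply H; lia). rewrite H by lia. ring.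
Qed.

Lemma sum_ge1 (f : nat -> R) N i : (forall n, 0 <= f n) -> (i <= N)%nat -> f i <= sum_f_R0 f N.
Proof.
  intros Hp. induction N; intros Hi; simpl.
  - replace i with 0%nat by lia. lra.
  - destruct (Nat.eq_dec i (S N)) as [->|ne].
    + pose proof (cond_pos_sum f N Hp). lra.
    + pose proof (IHN ltac:(lia)). pose proof (Hp (S N)). lra.
Qed.

Lemma sum_ge2 (f : nat -> R) N i j : (forall n, 0 <= f n) -> (i < j)%nat -> (j <= N)%nat ->
  f i + f j <= sum_f_R0 f N.
Proof.
  intros Hp Hij. induction N; intros Hj; simpl.
  - lia.
  - destruct (Nat.eq_dec j (S N)) as [->|ne].
    + pose proof (sum_ge1 f N i Hp ltac:(lia)). lra.
    + pose proof (IHN ltac:(lia)). pose proof (Hp (S N)). lra.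
Qed.

Lemma chi_cases c s : (0 <= s < c /\ chi c s = 1) \/ (~ (0 <= s < c) /\ chi c s = 0).
Proof.
  unfold chi. destruct (Rle_dec 0 s); [destruct (Rlt_dec s c)|]; [left|right|right]; split; auto; lra.
Qed.

Section W.
Variables a b c t : R.
Variable x : Z -> R.
Hypothesis hb : 0 < b.
Hypothesis hc : 0 < c.
Hypothesis hx : in_Bb x.
Hypothesis hM : M_eq_one a b c t x.

Lemma term_nonneg m lo : forall n : nat,
  0 <= chi c (t - IZR m * a + IZR (lo + Z.of_nat n) * b) * x (lo + Z.of_nat n)%Z.
Proof.
  intros n. destruct (chi_cases c (t - IZR m * a + IZR (lo + Z.of_nat n) * b)) as [[_ ->]|[_ ->]];
  destruct (hx (lo + Z.of_nat n)%Z) as [-> | ->]; lra.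
Qed.

Lemma win_range m k : IZR m * a - t <= IZR k * b < IZR m * a - t + c ->
  (Int_part ((IZR m * a - t) / b) <= k <= Int_part ((IZR m * a - t + c) / b))%Z.
Proof.
  intros [h1 h2].
  destruct (floor_mul (IZR m * a - t) b hb).
  destruct (floor_mul (IZR m * a - t + c) b hb).
  split.
  - apply (zle_mul _ _ b hb). lra.
  - assert (k < Int_part ((IZR m * a - t + c) / b) + 1)%Z; [|lia].
    apply (zlt_mul _ _ b hb). rewrite plus_IZR. lra.
Qed.

Lemma win_ex m : exists k, x k = 1 /\ IZR m * a - t <= IZR k * b < IZR m * a - t + c.
Proof.
  apply NNPP. intros Hn. pose proof (hM m) as H. unfold Mx_entry in H.
  rewrite sum_zero in H; [lra|].
  intros i _. set (k := (Int_part ((IZR m * a - t) / b) + Z.of_nat i)%Z).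
  destruct (hx k) as [e|e]; rewrite e; [ring|].
  destruct (chi_cases c (t - IZR m * a + IZR k * b)) as [[h1 _]|[_ ->]]; [|ring].
  exfalso. apply Hn. exists k. split; [auto|lra].
Qed.

Lemma win_uniq m k1 k2 : x k1 = 1 -> x k2 = 1 ->
  IZR m * a - t <= IZR k1 * b < IZR m * a - t + c ->
  IZR m * a - t <= IZR k2 * b < IZR m * a - t + c -> k1 = k2.
Proof.
  intros e1 e2 w1 w2.
  assert (G : forall k1 k2, x k1 = 1 -> x k2 = 1 ->
    IZR m * a - t <= IZR k1 * b < IZR m * a - t + c ->
    IZR m * a - t <= IZR k2 * b < IZR m * a - t + c -> (k1 < k2)%Z -> False).
  { clear k1 k2 e1 e2 w1 w2. intros k1 k2 e1 e2 w1 w2 lt.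
    pose proof (win_range m k1 w1) as r1. pose proof (win_range m k2 w2) as r2.
    pose proof (hM m) as H. unfold Mx_entry in H.
    set (lo := Int_part ((IZR m * a - t) / b)) in *.
    set (hi := Int_part ((IZR m * a - t + c) / b)) in *.
    set (f := fun j : nat => chi c (t - IZR m * a + IZR (lo + Z.of_nat j) * b) * x (lo + Z.of_nat j)%Z) in *.
    pose proof (sum_ge2 f (Z.to_nat (hi - lo)) (Z.to_nat (k1 - lo)) (Z.to_nat (k2 - lo))
      (term_nonneg m lo) ltac:(lia) ltac:(lia)) as S.
    unfold f in S. rewrite !Z2Nat.id in S by lia.
    replace (lo + (k1 - lo))%Z with k1 in S by lia.
    replace (lo + (k2 - lo))%Z with k2 in S by lia.
    rewrite e1, e2 in S.
    destruct (chi_cases c (t - IZR m * a + IZR k1 * b)) as [[_ c1]|[n1 _]]; [|lra].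
    destruct (chi_cases c (t - IZR m * a + IZR k2 * b)) as [[_ c2]|[n2 _]]; [|lra].
    rewrite c1, c2 in S. fold f in S. lra. }
  destruct (Z.lt_total k1 k2) as [l|[l|l]]; auto; exfalso; eauto.
Qed.
End W.
Section Core.
Variables a b c t : R.
Variable x : Z -> R.
Hypothesis ha : 0 < a.
Hypothesis hab : a < b.
Hypothesis hbc : b < c.
Hypothesis hx : in_Bb0 x.
Hypothesis hM : M_eq_one a b c t x.

Let N := Int_part (c / b).

Lemma c0_bounds : 0 <= c - IZR N * b < b.
Proof. destruct (floor_mul c b ltac:(lra)). unfold N. lra. Qed.

Lemma lam_core q r : t = IZR q * a + r -> 0 <= r < a ->
  exists k, x k = 1 /\ ((k = (N+1)%Z /\ r < (c - IZR N * b) + a - b) \/ (k = N /\ c - IZR N * b <= r)) /\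
  (forall k', x k' = 1 -> 0 < IZR k' * b < IZR k * b -> False).
Proof.
  intros ht hr. destruct hx as [hB h0]. pose proof c0_bounds.
  assert (hb : 0 < b) by lra. assert (hc : 0 < c) by lra.
  destruct (win_ex a b c t x hB hM (q+1)) as [k [ek wk]].
  rewrite plus_IZR in wk.
  assert (w0 : IZR q * a - t <= IZR 0 * b < IZR q * a - t + c) by (simpl; nra).
  assert (kc : c - r <= IZR k * b).
  { apply Rnot_lt_le. intros l.
    assert (k = 0%Z) as -> by (apply (win_uniq a b c t x hb hB hM q); auto; nra).
    simpl in wk. nra. }
  exists k. split; auto. split.
  - destruct (z01 (k - N) b hb) as [e|e]; rewrite ?minus_IZR; try nra.
    + right. split; [lia|]. assert (k = N) by lia. subst k. nra.
    + left. split; [lia|]. assert (k = N+1)%Z as -> by lia. rewrite plus_IZR in wk. nra.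
  - intros k' e' [l1 l2].
    destruct (Rlt_le_dec (IZR k' * b) (c - r)).
    + assert (k' = 0%Z) as -> by (apply (win_uniq a b c t x hb hB hM q); auto; nra).
      simpl in l1. lra.
    + assert (k' = k) as -> by (apply (win_uniq a b c t x hb hB hM (q+1)); auto; rewrite plus_IZR; nra).
      lra.
Qed.

Lemma lamt_core q r : t - (c - a) = IZR q * a + r -> 0 <= r < a ->
  exists k, x k = 1 /\ ((k = (-N-1)%Z /\ b - (c - IZR N * b) <= r) \/ (k = (-N)%Z /\ r < a - (c - IZR N * b))) /\
  (forall k', x k' = 1 -> IZR k * b < IZR k' * b < 0 -> False).
Proof.
  intros ht hr. destruct hx as [hB h0]. pose proof c0_bounds.
  assert (hb : 0 < b) by lra. assert (hc : 0 < c) by lra.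
  destruct (win_ex a b c t x hB hM (q-1)) as [k [ek wk]].
  rewrite minus_IZR in wk.
  assert (w0 : IZR q * a - t <= IZR 0 * b < IZR q * a - t + c) by (simpl; nra).
  assert (kc : IZR k * b < a - c - r).
  { apply Rnot_le_lt. intros l.
    assert (k = 0%Z) as -> by (apply (win_uniq a b c t x hb hB hM q); auto; nra).
    simpl in wk. nra. }
  exists k. split; auto. split.
  - destruct (z01 (k + N + 1) b hb) as [e|e]; rewrite ?plus_IZR; try nra.
    + left. split; [lia|]. assert (k = -N-1)%Z as -> by lia.
      rewrite minus_IZR, opp_IZR in wk, kc. nra.
    + right. split; [lia|]. assert (k = -N)%Z as -> by lia. rewrite opp_IZR in wk, kc. nra.
  - intros k' e' [l1 l2].
    destruct (Rle_lt_dec (a - c - r) (IZR k' * b)).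
    + assert (k' = 0%Z) as -> by (apply (win_uniq a b c t x hb hB hM q); auto; nra).
      simpl in l2. lra.
    + assert (k' = k) as -> by (apply (win_uniq a b c t x hb hB hM (q-1)); auto; rewrite minus_IZR; nra).
      lra.
Qed.
End Core.
Theorem proposition3p6 (a b c : R) (ha : 0 < a) (hab : a < b) (hbc : b < c) :
  (forall t : R, S_abc a b c t ->
     ~ in_shift (fun s => Ico (posp a b c) (minca a b c) s \/
                          Ico (c - minca a b c) (c - posp a b c) s) a t)
  /\
  (forall (t : R) (x : Z -> R), S_abc a b c t -> in_Bb0 x -> M_eq_one a b c t x ->
     (forall k : Z, IZR k * b = lam a b c t -> x k = 1) /\
     x 0%Z = 1 /\
     (forall k : Z, IZR k * b = lamt a b c t -> x k = 1) /\
     (forall k : Z, lamt a b c t < IZR k * b < lam a b c t -> k <> 0%Z -> x k = 0)).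
Proof.
  assert (hb : 0 < b) by lra.
  pose proof (c0_bounds a b c) as C0.
  split.
  - intros t [x [hx hM]] [k [H|H]]; unfold Ico, posp, minca, c0, floorR in H;
    unfold Rmax, Rmin in H.
    + destruct (lam_core a b c t x ha hab hbc hx hM k (t - IZR k * a)) as [k1 [_ [D _]]];
      [ring| destruct (Rle_dec (c - IZR (Int_part (c / b)) * b + a - b) 0);
             destruct (Rle_dec (c - IZR (Int_part (c / b)) * b) a); lra |].
      destruct (Rle_dec (c - IZR (Int_part (c / b)) * b + a - b) 0);
      destruct (Rle_dec (c - IZR (Int_part (c / b)) * b) a); lra.
    + destruct (lamt_core a b c t x ha hab hbc hx hM k (t - IZR k * a - (c - a))) as [k1 [_ [D _]]];
      [ring| destruct (Rle_dec (c - IZR (Int_part (c / b)) * b + a - b) 0);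
             destruct (Rle_dec (c - IZR (Int_part (c / b)) * b) a); lra |].
      destruct (Rle_dec (c - IZR (Int_part (c / b)) * b + a - b) 0);
      destruct (Rle_dec (c - IZR (Int_part (c / b)) * b) a); lra.
  - intros t x _ hx hM.
    destruct (floor_mul t a ha) as [f1 f2].
    destruct (floor_mul (t - (c - a)) a ha) as [g1 g2].
    destruct (lam_core a b c t x ha hab hbc hx hM (Int_part (t / a)) (t - IZR (Int_part (t / a)) * a))
      as [k1 [e1 [D1 U1]]]; [ring|lra|].
    destruct (lamt_core a b c t x ha hab hbc hx hM (Int_part ((t - (c - a)) / a))
      (t - (c - a) - IZR (Int_part ((t - (c - a)) / a)) * a))
      as [k2 [e2 [D2 U2]]]; [ring|lra|].
    assert (L1 : lam a b c t = IZR k1 * b).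
    { unfold lam, modR, posp, minca, c0, floorR, Rmax, Rmin.
      destruct (Rle_dec (c - IZR (Int_part (c / b)) * b + a - b) 0);
      destruct (Rle_dec (c - IZR (Int_part (c / b)) * b) a);
      repeat match goal with |- context [Rlt_dec ?u ?v] => destruct (Rlt_dec u v) end;
      destruct D1 as [[-> ?]|[-> ?]]; rewrite ?plus_IZR; lra. }
    assert (L2 : lamt a b c t = IZR k2 * b).
    { unfold lamt, modR, posp, minca, c0, floorR, Rmax, Rmin.
      destruct (Rle_dec (c - IZR (Int_part (c / b)) * b + a - b) 0);
      destruct (Rle_dec (c - IZR (Int_part (c / b)) * b) a);
      repeat match goal with |- context [Rlt_dec ?u ?v] => destruct (Rlt_dec u v) end;
      destruct D2 as [[-> ?]|[-> ?]]; rewrite ?minus_IZR, ?opp_IZR; lra. }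
    rewrite L1, L2. destruct hx as [hB h0].
    split; [|split; [auto|split]].
    + intros k e. rewrite (zeq_mul k k1 b hb e). auto.
    + intros k e. rewrite (zeq_mul k k2 b hb e). auto.
    + intros k [l1 l2] nz. destruct (hB k) as [e|e]; auto. exfalso.
      destruct (Rtotal_order (IZR k * b) 0) as [n|[n|n]].
      * eapply U2; eauto.
      * apply nz. apply (zeq_mul k 0 b hb). simpl. lra.
      * eapply U1; eauto.
Qed.
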